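(* Let $A, B \in \mathbb{R}^{n\times n}_+$ be entrywise nonnegative Schur-stable matrices. Let $\mathcal{D}_{A,B}$ denote the set of diagonal matrices $D\in\mathbb{R}^{n\times n}$ with nonnegative diagonal entries such that $A-D$ and $B-D$ are both entrywise nonnegative. For $D\in\mathcal{D}_{A,B}$ let $$M=\begin{pmatrix} A-D & D\\ D & B-D\end{pmatrix}\in\mathbb{R}^{2n\times 2n}.$$ Consider the statements: (i) there exists a diagonal matrix $E\succ 0$ with $A^TEA-E\prec 0$ and $B^TEB-E\prec 0$; (ii) there exists a diagonal matrix $E\succ 0$ with $(A-I)^TE+E(A-I)\prec 0$ and $(B-I)^TE+E(B-I)\prec 0$; (iii) for every $D\in\mathcal{D}_{A,B}$, the matrix $M$ is Schur-stable. Then (i) $\Rightarrow$ (ii) $\Rightarrow$ (iii).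
   Context: A real square matrix is Schur-stable if its spectral radius is strictly less than $1$. For a symmetric matrix $P$, $P\succ 0$ ($P\prec 0$) means $P$ is positive (negative) definite. $\mathbb{R}^{n\times n}_+$ denotes the set of entrywise nonnegative $n\times n$ real matrices. *)

(* Defs.v *)
From HB Require Import structures.
From mathcomp Require Import all_boot all_order all_algebra.
From mathcomp Require Import reals complex.
Set Implicit Arguments. Unset Strict Implicit. Unset Printing Implicit Defensive.
Import Order.TTheory GRing.Theory Num.Theory.
Local Open Scope ring_scope.

Definition nonneg_mx (R : realType) (m n : nat) (A : 'M[R]_(m, n)) : Prop :=
  forall i j, 0 <= A i j.

Definition schur_stable (R : realType) (n : nat) (A : 'M[R]_n) : Prop :=
  forall lambda : R[i],
    eigenvalue (map_mx (fun x : R => (x%:C)%C) A) lambda -> `|lambda| < 1.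

Definition posdef (R : realType) (n : nat) (P : 'M[R]_n) : Prop :=
  P^T = P /\ forall x : 'cV[R]_n, x != 0 -> 0 < (x^T *m P *m x) 0 0.

Definition negdef (R : realType) (n : nat) (P : 'M[R]_n) : Prop :=
  P^T = P /\ forall x : 'cV[R]_n, x != 0 -> (x^T *m P *m x) 0 0 < 0.

Definition DAB (R : realType) (n : nat) (A B D : 'M[R]_n) : Prop :=
  is_diag_mx D /\ (forall i, 0 <= D i i) /\ nonneg_mx (A - D) /\ nonneg_mx (B - D).

Definition Mmat (R : realType) (n : nat) (A B D : 'M[R]_n) : 'M[R]_(n + n) :=
  block_mx (A - D) D D (B - D).

(* Main.v *)
Require Import Defs.
From HB Require Import structures.
From mathcomp Require Import all_boot all_order all_algebra.
From mathcomp Require Import reals complex.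
From mathcomp Require Import ring lra.
Import Order.TTheory GRing.Theory Num.Theory.
Local Open Scope ring_scope.

Lemma zl (V : zmodType) (a b c d : V) : a - c + (b - c) = d - c - (d - a - (b - c)).
Proof. rewrite !opprB [b - c + _]addrC [RHS]addrA; congr (_ + _). by rewrite [RHS]addrC [RHS]addrA subrK. Qed.

Lemma mxsubE (R : pzRingType) m n (X Y : 'M[R]_(m,n)) i j : (X - Y) i j = X i j - Y i j.
Proof. by rewrite !mxE. Qed.
Lemma mxaddE (R : pzRingType) m n (X Y : 'M[R]_(m,n)) i j : (X + Y) i j = X i j + Y i j.
Proof. by rewrite !mxE. Qed.

Lemma qf (R : realType) n (A E : 'M[R]_n) (w : 'I_n -> R) :
  is_diag_mx E -> E^T = E -> (forall j, E j j != 0) ->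
  ((\col_j (w j / E j j))^T *m ((A - 1%:M)^T *m E + E *m (A - 1%:M)) *m (\col_j (w j / E j j))) 0 0
   = 2 * \sum_j (w j / E j j) * (\sum_i w i * A i j - w j).
Proof.
move=> Ed ET E0; set x := \col_j (w j / E j j).
have xE : x^T *m E = \row_i w i.
  apply/rowP => i; rewrite !mxE (bigD1 i) //= big1 => [|k ki]; last first.
    by rewrite (is_diag_mxP Ed k i ki) mulr0.
  by rewrite !mxE addr0 divfK.
have h1 : (x^T *m (A - 1%:M)^T *m E *m x) = (x^T *m E *m (A - 1%:M) *m x)^T.
  by rewrite !trmx_mul trmxK ET !mulmxA.
rewrite mulmxDr mulmxDl mxaddE !mulmxA h1 [in X in X + _]mxE xE.
suff -> : (\row_i w i *m (A - 1%:M) *m x) 0 0 = \sum_j w j / E j j * (\sum_i w i * A i j - w j).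
  by rewrite mulr_natl mulr2n.
rewrite mxE; apply: eq_bigr => j _.
rewrite mulrC; congr (_ * _); first by rewrite mxE.
rewrite mxE (eq_bigr (fun i => w i * A i j - w i * (i == j)%:R)); last first.
  by move=> i _; rewrite !mxE mulrBr.
rewrite sumrB; congr (_ - _).
rewrite (bigD1 j) //= big1 => [|k kj]; first by rewrite eqxx mulr1 addr0.
by rewrite (negPf kj) mulr0.
Qed.

Lemma diag_pos (R : realType) n (E : 'M[R]_n) j : posdef E -> 0 < E j j.
Proof.
move=> [_ Ep].
have d0 : delta_mx j 0 != 0 :> 'cV[R]_n.
  apply/eqP => /matrixP /(_ j 0); rewrite !mxE !eqxx /=; apply/eqP; exact: oner_neq0.
have := Ep _ d0; rewrite trmx_delta -rowE -colE !mxE.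
by [].
Qed.

Lemma q_le0 (R : realType) n (P : 'M[R]_n) (x : 'cV[R]_n) : negdef P -> (x^T *m P *m x) 0 0 <= 0.
Proof.
move=> [_ Pn]; have [->|x0] := eqVneq x 0; last exact/ltW/Pn.
by rewrite trmx0 mul0mx mul0mx mxE.
Qed.

Lemma real_r (R : realType) n (A B D E : 'M[R]_n) (w1 w2 : 'I_n -> R) (r : R) :
  is_diag_mx E -> posdef E -> (forall j, 0 <= D j j) ->
  negdef ((A - 1%:M)^T *m E + E *m (A - 1%:M)) ->
  negdef ((B - 1%:M)^T *m E + E *m (B - 1%:M)) ->
  (forall j, 0 <= w1 j) -> (forall j, 0 <= w2 j) ->
  ((exists j, w1 j != 0) \/ (exists j, w2 j != 0)) ->
  (forall j, r * w1 j <= \sum_i w1 i * A i j - w1 j * D j j + w2 j * D j j) ->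
  (forall j, r * w2 j <= \sum_i w2 i * B i j - w2 j * D j j + w1 j * D j j) ->
  r < 1.
Proof.
move=> Ed Ep Dp NA NB w1p w2p wnz h1 h2.
have Ej j : 0 < E j j := @diag_pos R n E j Ep.
have E0 j : E j j != 0 by rewrite gt_eqF.
have ET : E^T = E by case: Ep.
have x0 (w : 'I_n -> R) j : w j != 0 -> \col_j (w j / E j j) != 0.
  move=> wj; apply/eqP => /matrixP /(_ j 0); rewrite !mxE => /eqP.
  by rewrite mulf_eq0 invr_eq0 (negPf wj) (negPf (E0 j)).
have qA := @q_le0 R n _ (\col_j (w1 j / E j j)) NA.
have qB := @q_le0 R n _ (\col_j (w2 j / E j j)) NB.
have qsum : (((\col_j (w1 j / E j j))^T *m ((A - 1%:M)^T *m E + E *m (A - 1%:M)) *m (\col_j (w1 j / E j j))) 0 0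
   + ((\col_j (w2 j / E j j))^T *m ((B - 1%:M)^T *m E + E *m (B - 1%:M)) *m (\col_j (w2 j / E j j))) 0 0) < 0.
  case: wnz => [[j wj]|[j wj]].
    have := NA.2 _ (x0 _ _ wj); lra.
  have := NB.2 _ (x0 _ _ wj); lra.
rewrite !qf // in qsum.
rewrite ltNge; apply/negP => r1.
suff : 0 <= \sum_j w1 j / E j j * (\sum_i w1 i * A i j - w1 j) + \sum_j w2 j / E j j * (\sum_i w2 i * B i j - w2 j).
  lra.
rewrite -big_split /=; apply: sumr_ge0 => j _.
have := h1 j; have := h2 j; have := w1p j; have := w2p j; have := Ej j; have := Dp j.
move: (\sum_i w1 i * A i j) (\sum_i w2 i * B i j) (w1 j) (w2 j) (E j j) (D j j) => S1 S2 a b e d.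
move=> d0 e0 b0 a0 hb ha.
have ea : a / e * (S1 - a) >= a / e * ((r - 1) * a + d * (a - b)).
  apply: ler_wpM2l; [by apply: divr_ge0; lra | lra].
have eb : b / e * (S2 - b) >= b / e * ((r - 1) * b + d * (b - a)).
  apply: ler_wpM2l; [by apply: divr_ge0; lra | lra].
have ab : 0 <= a / e * ((r - 1) * a) + b / e * ((r - 1) * b).
  apply: addr_ge0; apply: mulr_ge0; (try apply: divr_ge0); (try apply: mulr_ge0); lra.
have dd : 0 <= a / e * (d * (a - b)) + b / e * (d * (b - a)).
  have -> : a / e * (d * (a - b)) + b / e * (d * (b - a)) = d / e * (a - b) ^+ 2.
    rewrite expr2; field; by rewrite gt_eqF.
  by apply: mulr_ge0; [apply: divr_ge0; lra | apply: sqr_ge0].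
lra.
Qed.

Lemma diag_sum (R : realType) n (D : 'M[R]_n) (w : 'I_n -> R) j :
  is_diag_mx D -> \sum_i w i * D i j = w j * D j j.
Proof.
move=> Dd; rewrite (bigD1 j) //= big1 ?addr0 // => i ij.
by rewrite (is_diag_mxP Dd i j ij) mulr0.
Qed.

Lemma Mmat_nonneg (R : realType) n (A B D : 'M[R]_n) : DAB A B D -> nonneg_mx (Mmat A B D).
Proof.
move=> [Dd [Dp [AD BD]]] i j.
have D0 k l : 0 <= D k l.
  have [->|kl] := eqVneq k l; first exact: Dp.
  by rewrite (is_diag_mxP Dd k l kl).
rewrite /Mmat -(splitK i) -(splitK j).
case: (split i) => i'; case: (split j) => j' /=.
- by rewrite block_mxEul; apply: AD.
- by rewrite block_mxEur.
- by rewrite block_mxEdl.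
- by rewrite block_mxEdr; apply: BD.
Qed.

Lemma eig_ineq (R : realType) m (M : 'M[R]_m) (lam : R[i]) (v : 'rV[R[i]]_m) :
  nonneg_mx M -> v *m map_mx (fun x : R => (x%:C)%C) M = lam *: v ->
  forall j, Normc.normc lam * Normc.normc (v 0 j) <= \sum_i Normc.normc (v 0 i) * M i j.
Proof.
move=> Mp ev j.
have e := congr1 (fun X : 'rV[R[i]]_m => X 0 j) ev; simpl in e; rewrite !mxE in e.
rewrite -lecR rmorphM rmorph_sum /=.
have -> : ((Normc.normc lam)%:C * (Normc.normc (v 0 j))%:C)%C = `|lam * v 0 j| by rewrite normrM.
rewrite -e; apply: le_trans (ler_norm_sum _ _ _) _; apply: ler_sum => i _.
by rewrite normrM rmorphM /= [X in _ * X]ger0_norm mxE // ler0c.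
Qed.

Lemma step23 (R : realType) n (A B E D : 'M[R]_n) :
  is_diag_mx E -> posdef E ->
  negdef ((A - 1%:M)^T *m E + E *m (A - 1%:M)) ->
  negdef ((B - 1%:M)^T *m E + E *m (B - 1%:M)) ->
  DAB A B D -> schur_stable (Mmat A B D).
Proof.
move=> Ed Ep NA NB hD lam eig.
have [v ev v0] := eigenvalueP eig.
have hM := @eig_ineq R _ _ lam v (@Mmat_nonneg R n A B D hD) ev.
set W := fun i => Normc.normc (v 0 i).
have Wp i : 0 <= W i by rewrite -ler0c; exact: (normr_ge0 (v 0 i)).
have [Dd [Dp _]] := hD.
suff : Normc.normc lam < 1.
  by move=> h; change ((Normc.normc lam)%:C < 1%:C)%C; rewrite ltcR.
apply: (@real_r R n A B D E (fun i => W (lshift n i)) (fun i => W (rshift n i))) => //.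
- have /existsP [k vk] : [exists k, v 0 k != 0].
    apply: contraNT v0 => /existsPn H; apply/eqP/rowP => k; rewrite mxE.
    by apply/eqP; have := H k; rewrite negbK.
  have Wk : W k != 0 by apply: contra vk => /eqP/Normc.eq0_normc ->.
  rewrite -(splitK k) in Wk; case: (split k) Wk => k' /= Wk; [left|right]; exists k'; exact: Wk.
- move=> j; have := hM (lshift n j); rewrite big_split_ord /= /Mmat.
  under eq_bigr => i _ do rewrite block_mxEul mxsubE mulrBr.
  under [X in _ <= _ + X]eq_bigr => i _ do rewrite block_mxEdl.
  by rewrite sumrB (@diag_sum R n D (fun i => Normc.normc (v 0 (lshift n i))) j Dd) (@diag_sum R n D (fun i => Normc.normc (v 0 (rshift n i))) j Dd).
- move=> j; have := hM (rshift n j); rewrite big_split_ord /= /Mmat.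
  under eq_bigr => i _ do rewrite block_mxEur.
  under [X in _ <= _ + X]eq_bigr => i _ do rewrite block_mxEdr mxsubE mulrBr.
  rewrite sumrB (@diag_sum R n D (fun i => Normc.normc (v 0 (lshift n i))) j Dd) (@diag_sum R n D (fun i => Normc.normc (v 0 (rshift n i))) j Dd).
  rewrite /W; lra.
Qed.

Lemma posdef_ge0 (R : realType) n (E : 'M[R]_n) (y : 'cV[R]_n) : posdef E -> 0 <= (y^T *m E *m y) 0 0.
Proof.
move=> [_ Ep]; have [->|y0] := eqVneq y 0; last exact/ltW/Ep.
by rewrite trmx0 mul0mx mul0mx mxE.
Qed.

Lemma step12 (R : realType) n (A E : 'M[R]_n) : posdef E -> negdef (A^T *m E *m A - E) ->
  negdef ((A - 1%:M)^T *m E + E *m (A - 1%:M)).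
Proof.
move=> Ed [_ Qneg]; have [ET Epos] := Ed; split.
  by rewrite linearD /= !trmx_mul ET trmxK addrC.
move=> x x0.
have key : (A - 1%:M)^T *m E + E *m (A - 1%:M) = (A^T *m E *m A - E) - (A - 1%:M)^T *m E *m (A - 1%:M).
  by rewrite linearB /= trmx1 !mulmxBl !mulmxBr !mul1mx !mulmx1; apply: zl.
rewrite key mulmxBr mulmxBl mxsubE.
have h1 := Qneg x x0.
have h2 := @posdef_ge0 R n E ((A - 1%:M) *m x) Ed.
rewrite trmx_mul !mulmxA in h2.
rewrite !mulmxA; lra.
Qed.

Theorem theorem2 (R : realType) (n : nat) (A B : 'M[R]_n) :
  nonneg_mx A -> nonneg_mx B -> schur_stable A -> schur_stable B ->
  let st1 := exists E : 'M[R]_n, is_diag_mx E /\ posdef E /\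
               negdef (A^T *m E *m A - E) /\ negdef (B^T *m E *m B - E) in
  let st2 := exists E : 'M[R]_n, is_diag_mx E /\ posdef E /\
               negdef ((A - 1%:M)^T *m E + E *m (A - 1%:M)) /\
               negdef ((B - 1%:M)^T *m E + E *m (B - 1%:M)) in
  let st3 := forall D : 'M[R]_n, DAB A B D -> schur_stable (Mmat A B D) in
  (st1 -> st2) /\ (st2 -> st3).
Proof.
move=> _ _ _ _ /=; split.
  move=> [E [Ed [Ep [QA QB]]]]; exists E; split=> //; split=> //.
  by split; apply: step12.
move=> [E [Ed [Ep [NA NB]]]] D hD; exact: (@step23 R n A B E D Ed Ep NA NB hD).
Qed.
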